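(* Let $G$ be a graph and $e=uv\in E(G)$. If $m\geq 2$ is an integer and $$P(G-\{e\},m)<\frac{m}{m-1}P(G,m),$$ then $P_{DP}(G,m)<P(G,m)$.
   Context: All graphs are finite and simple; $G-\{e\}$ is $G$ with edge $e$ deleted. $P(G,m)$ denotes the chromatic polynomial of $G$. A cover of a graph $G$ is a pair $\mathcal{H}=(L,H)$ where $H$ is a graph and $L:V(G)\to\mathcal{P}(V(H))$ satisfies: (1) the sets $L(u)$, $u\in V(G)$, partition $V(H)$; (2) for every $u$, $H[L(u)]$ is complete; (3) if $E_H(L(u),L(v))\neq\emptyset$ then $u=v$ or $uv\in E(G)$; (4) if $uv\in E(G)$ then $E_H(L(u),L(v))$ is a matching (possibly empty). Here $E_H(S,U)$ is the set of edges of $H$ between $S$ and $U$. The cover is $m$-fold if $|L(u)|=m$ for all $u$. An $\mathcal{H}$-coloring is an independent set of $H$ of size $|V(G)|$. $P_{DP}(G,\mathcal{H})$ is the number of $\mathcal{H}$-colorings, and $P_{DP}(G,m)$ is the minimum of $P_{DP}(G,\mathcal{H})$ over all $m$-fold covers $\mathcal{H}$ of $G$. *)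

(* Defs.v *)
From HB Require Import structures.
From mathcomp Require Import all_boot all_order all_algebra.
From Stdlib Require Import ClassicalEpsilon.
Definition pbool (P : Prop) : bool := if excluded_middle_informative P then true else false.
Set Implicit Arguments. Unset Strict Implicit. Unset Printing Implicit Defensive.

Definition simple_graph (T : finType) (g : rel T) : Prop :=
  symmetric g /\ irreflexive g.

Definition del_edge (T : finType) (g : rel T) (u v : T) : rel T :=
  fun x y => g x y && ~~ (((x == u) && (y == v)) || ((x == v) && (y == u))).

Definition chrom (T : finType) (g : rel T) (m : nat) : nat :=
  #|[set f : {ffun T -> 'I_m} | [forall x, forall y, g x y ==> (f x != f y)]]|.

Definition is_cover (T : finType) (g : rel T) (VH : finType) (H : rel VH)
    (L : T -> {set VH}) : Prop :=
  [/\ simple_graph H,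
      (forall x : VH, exists u, x \in L u) /\
      (forall (u w : T) (x : VH), x \in L u -> x \in L w -> u = w),
      (forall (u : T) (x y : VH), x \in L u -> y \in L u -> x != y -> H x y),
      (forall (u v : T) (x y : VH), x \in L u -> y \in L v -> H x y ->
          u = v \/ g u v) &
      (forall u v : T, g u v ->
         (forall x y y', x \in L u -> y \in L v -> y' \in L v ->
             H x y -> H x y' -> y = y') /\
         (forall x x' y, x \in L u -> x' \in L u -> y \in L v ->
             H x y -> H x' y -> x = x'))].

Definition is_mfold_cover (T : finType) (g : rel T) (m : nat) (VH : finType)
    (H : rel VH) (L : T -> {set VH}) : Prop :=
  is_cover g H L /\ forall u, #|L u| = m.

(* Number of H-colorings: independent sets of H of size |V(G)|. *)
Definition PDP_cover (T : finType) (VH : finType) (H : rel VH) : nat :=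
  #|[set I : {set VH} | [forall x in I, forall y in I, ~~ H x y]
                        && (#|I| == #|T|)]|.

Definition edge_rel (VH : finType) (E : {set VH * VH}) : rel VH :=
  fun x y => (x, y) \in E.

(* An m-fold cover
   has exactly |V(G)| * m vertices, so up to isomorphism (which preserves the
   number of H-colorings) every m-fold cover has vertex set T * 'I_m; we take
   the minimum over all such covers (all L, all edge sets).  The initial value
   m ^ #|T| is an upper bound for every P_DP(G,H) (an independent set meets
   each clique L(u) at most once), and m-fold covers always exist, so the
   fold computes the true minimum. *)
Definition PDP (T : finType) (g : rel T) (m : nat) : nat :=
  \big[minn/(m ^ #|T|)%N]_(L : {ffun T -> {set T * 'I_m}})
   \big[minn/(m ^ #|T|)%N]_(E : {set (T * 'I_m) * (T * 'I_m)}
                             | pbool (is_mfold_cover g m (edge_rel E) L))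
      PDP_cover T (edge_rel E).

(* Main.v *)
Require Import Defs.
From HB Require Import structures.
From mathcomp Require Import all_boot all_order all_algebra.
From mathcomp Require Import zify.
From Stdlib Require Import ClassicalEpsilon.
Import Order.TTheory GRing.Theory Num.Theory.
Set Implicit Arguments. Unset Strict Implicit. Unset Printing Implicit Defensive.

Definition isuv (T : finType) (u v x y : T) : bool :=
  ((x == u) && (y == v)) || ((x == v) && (y == u)).

Definition hrel (T : finType) (g : rel T) (u v : T) k (sh : 'I_k -> 'I_k)
  (p q : T * 'I_k) : bool :=
  [|| (p.1 == q.1) && (p.2 != q.2),
      [&& g p.1 q.1, ~~ isuv u v p.1 q.1 & p.2 == q.2],
      [&& p.1 == u, q.1 == v & q.2 == sh p.2]
    | [&& p.1 == v, q.1 == u & p.2 == sh q.2]].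

Definition Ecov (T : finType) (g : rel T) (u v : T) k (sh : 'I_k -> 'I_k) :
  {set (T * 'I_k) * (T * 'I_k)} := [set pq | hrel g u v sh pq.1 pq.2].

Definition Lcov (T : finType) k : {ffun T -> {set T * 'I_k}} :=
  [ffun x => setX [set x] [set: 'I_k]].

Lemma isuvC (T : finType) (u v x y : T) : isuv u v x y = isuv u v y x.
Proof. by rewrite /isuv orbC; congr (_ || _); rewrite andbC. Qed.

Lemma hrel_sym (T : finType) (g : rel T) (u v : T) k (sh : 'I_k -> 'I_k) :
  symmetric g -> forall p q, hrel g u v sh p q -> hrel g u v sh q p.
Proof.
move=> sg [a i] [b j]; rewrite /hrel /=.
case/or4P => [/andP[/eqP-> ne]|/and3P[gab nuv /eqP->]|/and3P[/eqP-> /eqP-> /eqP->]|/and3P[/eqP-> /eqP-> /eqP->]].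
- by rewrite eqxx eq_sym ne.
- by rewrite sg isuvC nuv eqxx /= gab /= orbT.
- by apply/or4P; constructor 4; rewrite !eqxx.
- by apply/or4P; constructor 3; rewrite !eqxx.
Qed.

Lemma hrel_cases (T : finType) (g : rel T) (u v : T) k (sh : 'I_k -> 'I_k) a b i j :
  a != b -> hrel g u v sh (a, i) (b, j) ->
  [\/ ~~ isuv u v a b /\ j = i, [/\ a = u, b = v & j = sh i] | [/\ a = v, b = u & i = sh j]].
Proof.
move=> nab; rewrite /hrel /= (negbTE nab) /=.
case/or3P => [/and3P[_ n /eqP->]|/and3P[/eqP-> /eqP-> /eqP->]|/and3P[/eqP-> /eqP-> /eqP->]].
- by constructor 1.
- by constructor 2.
- by constructor 3.
Qed.

Lemma cover_ok (T : finType) (g : rel T) (u v : T) k (sh : 'I_k -> 'I_k) :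
  simple_graph g -> g u v -> injective sh ->
  is_mfold_cover g k (edge_rel (Ecov g u v sh)) (Lcov T k).
Proof.
move=> [sg ig] guv ish.
have nuv : u != v by apply/eqP => e; rewrite e ig in guv.
have E : forall p q, edge_rel (Ecov g u v sh) p q = hrel g u v sh p q.
  by move=> p q; rewrite /edge_rel /Ecov inE.
have Lm : forall a (p : T * 'I_k), (p \in Lcov T k a) = (p.1 == a).
  by move=> a [b j]; rewrite /Lcov ffunE in_setX in_set1 in_setT andbT.
split; last by move=> a; rewrite /Lcov ffunE cardsX cards1 cardsT card_ord mul1n.
split.
- split.
  + by move=> p q; rewrite !E; apply/idP/idP; apply: hrel_sym.
  + move=> [a i]; rewrite E /hrel /= eqxx (ig a) /= eqxx /=.
    apply/negbTE/negP => /orP[] /and3P[/eqP e1 /eqP e2 _];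
      by move: nuv; rewrite -e1 -e2 eqxx.
- split; first by move=> p; exists p.1; rewrite Lm.
  by move=> a b p; rewrite !Lm => /eqP <- /eqP.
- move=> a [b i] [c j]; rewrite !Lm /= => /eqP -> /eqP -> ne.
  rewrite E /hrel /= eqxx /=; apply/orP; left.
  by apply: contra ne => /eqP ->.
- move=> a b [a' i] [b' j]; rewrite !Lm /= => /eqP -> /eqP ->; rewrite E /hrel /=.
  case/or4P => [/andP[/eqP-> _]|/and3P[gab _ _]|/and3P[/eqP-> /eqP-> _]|/and3P[/eqP-> /eqP-> _]].
  + by left.
  + by right.
  + by right.
  + by right; rewrite sg.
- move=> a b gab.
  have nab : a != b by apply/eqP => e; rewrite e ig in gab.
  split.
  + move=> [a1 i] [b1 j] [b2 j']; rewrite !Lm /= => /eqP-> /eqP-> /eqP->; rewrite !E.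
    move=> /(hrel_cases nab) H1 /(hrel_cases nab) H2.
    congr (_, _).
    case: H1 => [[n1 e1]|[e1 e2 e3]|[e1 e2 e3]];
    case: H2 => [[n2 f1]|[f1 f2 f3]|[f1 f2 f3]]; try congruence;
    try (by move: n1; rewrite /isuv f1 f2 !eqxx);
    try (by move: n2; rewrite /isuv e1 e2 !eqxx orbT);
    try (by move: n1; rewrite /isuv f1 f2 !eqxx orbT);
    try (by move: n2; rewrite /isuv e1 e2 !eqxx);
    try (by move: nuv; rewrite -e1 f1 eqxx);
    try (by move: nuv; rewrite -f1 e1 eqxx).
    by apply: ish; congruence.
  + move=> [a1 i] [a2 i'] [b1 j]; rewrite !Lm /= => /eqP-> /eqP-> /eqP->; rewrite !E.
    move=> /(hrel_cases nab) H1 /(hrel_cases nab) H2.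
    congr (_, _).
    case: H1 => [[n1 e1]|[e1 e2 e3]|[e1 e2 e3]];
    case: H2 => [[n2 f1]|[f1 f2 f3]|[f1 f2 f3]]; try congruence;
    try (by move: n1; rewrite /isuv f1 f2 !eqxx);
    try (by move: n2; rewrite /isuv e1 e2 !eqxx orbT);
    try (by move: n1; rewrite /isuv f1 f2 !eqxx orbT);
    try (by move: n2; rewrite /isuv e1 e2 !eqxx);
    try (by move: nuv; rewrite -e1 f1 eqxx);
    try (by move: nuv; rewrite -f1 e1 eqxx).
    by apply: ish; congruence.
Qed.
Lemma min_le_seq (I : eqType) (r : seq I) (x0 : nat) (P : pred I) (F : I -> nat) i0 :
  i0 \in r -> P i0 -> (\big[minn/x0]_(i <- r | P i) F i <= F i0)%N.
Proof.
elim: r => // a r IH; rewrite inE big_cons => /orP[/eqP<- ->|/IH H /H]; first exact: geq_minl.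
case: (P a) => // h; exact: leq_trans (geq_minr _ _) h.
Qed.

Lemma min_le (I : finType) (x0 : nat) (P : pred I) (F : I -> nat) i0 :
  P i0 -> (\big[minn/x0]_(i | P i) F i <= F i0)%N.
Proof. by move=> Pi; apply: min_le_seq => //; rewrite mem_index_enum. Qed.

Lemma pboolT (P : Prop) : P -> pbool P.
Proof. by rewrite /pbool; case: excluded_middle_informative. Qed.

Lemma PDP_le (T : finType) (g : rel T) m (L : {ffun T -> {set T * 'I_m}})
  (E : {set (T * 'I_m) * (T * 'I_m)}) :
  is_mfold_cover g m (edge_rel E) L -> (PDP g m <= PDP_cover T (edge_rel E))%N.
Proof.
move=> H; rewrite /PDP.
apply: leq_trans (@min_le _ _ xpredT _ L isT) _ => /=.
by apply: min_le; apply: pboolT.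
Qed.

Lemma cover_le (T : finType) k (i0 : 'I_k) (E : {set (T * 'I_k) * (T * 'I_k)}) :
  (forall x (i j : 'I_k), i != j -> edge_rel E (x, i) (x, j)) ->
  (PDP_cover T (edge_rel E) <=
   #|[set f : {ffun T -> 'I_k} | [forall x, forall y, ~~ edge_rel E (x, f x) (y, f y)]]|)%N.
Proof.
move=> Hs; rewrite /PDP_cover.
set S := [set I : {set T * 'I_k} | _].
pose phi (I : {set T * 'I_k}) : {ffun T -> 'I_k} :=
  [ffun x => odflt i0 [pick i | (x, i) \in I]].
have key : forall I, I \in S -> I = [set (x, phi I x) | x : T].
  move=> I; rewrite inE => /andP[/forallP ind /eqP cI].
  apply/eqP; rewrite eqEcard; apply/andP; split; last by rewrite cI leq_imset_card.
  apply/subsetP => [[x i]] xiI.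
  apply/imsetP; exists x => //; rewrite /phi ffunE.
  case: pickP => [j xjI|/(_ i)]; last by rewrite xiI.
  congr (_, _); apply/eqP; apply: contraT => ne.
  move: (ind (x, i)); rewrite xiI /= => /forallP /(_ (x, j)); rewrite xjI /=.
  by rewrite Hs.
apply: (@leq_trans #|phi @: S|).
  rewrite card_in_imset // => I J IS JS e.
  by rewrite (key I IS) (key J JS) e.
apply: subset_leq_card; apply/subsetP => f /imsetP [I IS ->]; rewrite inE.
apply/forallP => x; apply/forallP => y.
have IS' := IS; move: IS; rewrite inE => /andP[/forallP ind _].
have hx : (x, phi I x) \in I by rewrite {2}(key I IS'); apply: imset_f.
have hy : (y, phi I y) \in I by rewrite {2}(key I IS'); apply: imset_f.
by move: (ind (x, phi I x)); rewrite hx /= => /forallP /(_ (y, phi I y)); rewrite hy.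
Qed.
Local Open Scope ring_scope.

Theorem mainTheorem9 (T : finType) (g : rel T) (hG : simple_graph g)
    (u v : T) (huv : g u v) (m : nat) (hm : (2 <= m)%N) :
  ((chrom (del_edge g u v) m)%:R : rat) < m%:R / (m - 1)%:R * (chrom g m)%:R ->
  (PDP g m < chrom g m)%N.
Proof.
case: m hm => [|[|n]] // _.
set k := n.+2.
set N := chrom (del_edge g u v) k.
set P := chrom g k.
set A := [set f : {ffun T -> 'I_k} | [forall x, forall y, del_edge g u v x y ==> (f x != f y)]].
have NA : N = #|A| by [].
pose B (d : 'I_k) := [set f : {ffun T -> 'I_k} | f v == f u + d].
have step : forall d : 'I_k, (PDP g k + #|A :&: B d| <= N)%N.
  move=> d.
  pose sh := fun i : 'I_k => i + d.
  have ish : injective sh by apply: addIr.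
  have C := cover_ok hG huv ish.
  rewrite NA -(cardsID (B d) A) [X in (_ <= X)%N]addnC leq_add2r.
  apply: leq_trans (PDP_le C) _.
  apply: leq_trans (cover_le ord0 _) _.
    by move=> x i j ne; rewrite /edge_rel /Ecov inE /hrel /= eqxx ne.
  apply: subset_leq_card; apply/subsetP => f; rewrite inE => /forallP H.
  have H' : forall x y, ~~ hrel g u v sh (x, f x) (y, f y).
    by move=> x y; move: (H x) => /forallP /(_ y); rewrite /edge_rel /Ecov inE.
  rewrite !inE; apply/andP; split.
    apply/negP => /eqP e; move: (H' u v); rewrite /hrel /= e /sh !eqxx /=.
    by rewrite !orbT.
  apply/forallP => x; apply/forallP => y; apply/implyP => /andP[gxy nuv].
  apply/negP => /eqP e; move: (H' x y); rewrite /hrel /= e eqxx gxy /=.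
  by rewrite /isuv nuv /= orbT.
have sumB : (\sum_(d : 'I_k) #|A :&: B d| = N)%N.
  have E1 : forall d, #|A :&: B d| = (\sum_(f in A) (if f \in B d then 1 else 0))%N.
    move=> d; rewrite -sum1_card -big_mkcondr /=.
    by apply: eq_bigl => f; rewrite inE.
  under eq_bigr do rewrite E1.
  rewrite exchange_big /= NA -sum1_card; apply: eq_bigr => f _.
  rewrite -big_mkcond /= (eq_bigl (fun d => d == f v - f u)) ?big_pred1_eq //.
  by move=> d; rewrite inE [d == _]eq_sym subr_eq addrC.
have tot : (k * PDP g k + N <= k * N)%N.
  have : (\sum_(d : 'I_k) (PDP g k + #|A :&: B d|) <= \sum_(d : 'I_k) N)%N.
    by apply: leq_sum => d _; exact: step.
  rewrite big_split /= sumB !sum_nat_const card_ord.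
  by [].
rewrite mulrAC ltr_pdivlMr ?ltr0n // -!natrM ltr_nat.
move=> hyp; rewrite -/N -/P in hyp tot *.
rewrite /k in hyp tot *; nia.
Qed.
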